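(* For every Boolean function $f:\{0,1\}^n\to\{0,1\}$, we have $\deg(f)\le \lambda(f)^2$.
   Context: $\deg(f)$ is the degree of the unique multilinear real polynomial $q\in\mathbb{R}[x_1,\dots,x_n]$ with $q(x)=f(x)$ for all $x\in\{0,1\}^n$. For $f$ with domain $\mathrm{Dom}(f)\subseteq\{0,1\}^n$, the sensitivity graph $G_f$ has vertex set $\mathrm{Dom}(f)$ and an edge between $x$ and $y$ iff $x,y$ differ in exactly one coordinate and $f(x)\ne f(y)$. Let $A_f$ be its adjacency matrix; the spectral sensitivity is $\lambda(f)=\|A_f\|$ (spectral norm). *)

(* Defs.v *)
From HB Require Import structures.
From mathcomp Require Import all_boot all_order all_algebra.
From mathcomp Require Import classical_sets reals.
Set Implicit Arguments. Unset Strict Implicit. Unset Printing Implicit Defensive.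
Import Order.TTheory GRing.Theory Num.Theory.
Local Open Scope ring_scope.

Definition cube (n : nat) := {ffun 'I_n -> bool}.

Definition vnorm (R : realType) (m : nat) (v : 'cV[R]_m) : R :=
  Num.sqrt (\sum_(i < m) v i ord0 ^+ 2).

Definition spec_norm (R : realType) (m : nat) (A : 'M[R]_m) : R :=
  sup [set r : R | exists v : 'cV[R]_m, vnorm v = 1 /\ r = vnorm (A *m v)].

Definition sens_edge (n : nat) (f : cube n -> bool) (x y : cube n) : bool :=
  (#|[set i | x i != y i]| == 1)%N && (f x != f y).

Definition sens_adj (R : realType) (n : nat) (f : cube n -> bool)
  : 'M[R]_#|{: cube n}| :=
  \matrix_(i, j) (sens_edge f (enum_val i) (enum_val j))%:R.

Definition spec_sens (R : realType) (n : nat) (f : cube n -> bool) : R :=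
  spec_norm (sens_adj R f).

(* A multilinear real polynomial in x_1..x_n is given by its coefficient
   family c : {set 'I_n} -> R, namely q(x) = \sum_S c S * \prod_(i in S) x_i. *)
Definition ml_eval (R : realType) (n : nat) (c : {set 'I_n} -> R) (x : cube n) : R :=
  \sum_(S : {set 'I_n}) c S * \prod_(i in S) (x i)%:R.

Definition ml_represents (R : realType) (n : nat) (c : {set 'I_n} -> R)
  (f : cube n -> bool) : Prop :=
  forall x : cube n, ml_eval c x = (f x)%:R.

(* Main.v *)
Require Import Defs.
From HB Require Import structures.
From mathcomp Require Import all_boot all_order all_algebra.
From mathcomp Require Import classical_sets reals.
From mathcomp Require Import ring lra zify.
Import Order.TTheory GRing.Theory Num.Theory.
Local Open Scope ring_scope.
Set Implicit Arguments. Unset Strict Implicit. Unset Printing Implicit Defensive.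

Definition flip (n : nat) (x : cube n) (k : 'I_n) : cube n :=
  [ffun i => if i == k then ~~ x i else x i].

Lemma flipE n (x : cube n) k i : flip x k i = if i == k then ~~ x i else x i.
Proof. by rewrite ffunE. Qed.

Lemma flipK n (x : cube n) k : flip (flip x k) k = x.
Proof.
apply/ffunP=> i; rewrite !flipE; case: eqP => // _; by rewrite negbK.
Qed.

Lemma flip_inj n (x : cube n) k l : flip x k = flip x l -> k = l.
Proof.
move=> /ffunP /(_ k); rewrite !flipE eqxx.
case: eqP => // _; by case: (x k).
Qed.

Lemma flipC n (x : cube n) k l : flip (flip x k) l = flip (flip x l) k.
Proof.
apply/ffunP=> i; rewrite !flipE.
by case: (i =P l); case: (i =P k).
Qed.

Lemma flip_neq n (x : cube n) k : flip x k != x.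
Proof.
apply/eqP=> /ffunP /(_ k); rewrite flipE eqxx; by case: (x k).
Qed.

Lemma diff_flip n (x : cube n) k : [set i | x i != flip x k i] = [set k].
Proof.
apply/setP=> i; rewrite !inE flipE; case: (i =P k) => [->|ne].
  by case: (x k).
by rewrite eqxx.
Qed.

Lemma sens_edge_flip n (f : cube n -> bool) x k :
  f x != f (flip x k) -> sens_edge f x (flip x k) /\ sens_edge f (flip x k) x.
Proof.
move=> hf; rewrite /sens_edge; split; apply/andP; split => //.
- by rewrite diff_flip cards1.
- have -> : [set i | flip x k i != x i] = [set i | x i != flip x k i].
    by apply/setP=> i; rewrite !inE eq_sym.
  by rewrite diff_flip cards1.
- by rewrite eq_sym.
Qed.

Definition sg (R : realType) n (x : cube n) (k : 'I_n) : R :=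
  \prod_(j : 'I_n | (j < k)%N) (-1) ^+ (x j).

Lemma sg_flip (R : realType) n (x : cube n) k l :
  sg R (flip x k) l = (if (k < l)%N then -1 else 1) * sg R x l.
Proof.
rewrite /sg; case: ifP => hkl.
- rewrite (bigD1 k) //= (bigD1 k hkl) /= flipE eqxx mulrA.
  congr (_ * _); first by case: (x k); rewrite /= ?expr0 ?expr1 ?mulN1r ?opprK ?mulr1.
  apply: eq_bigr => i /andP [_ hik]; by rewrite flipE (negbTE hik).
- rewrite mul1r; apply: eq_bigr => i hi; rewrite flipE.
  case: eqP => // eik; by rewrite -eik hi in hkl.
Qed.

Lemma sg_sqr (R : realType) n (x : cube n) k : sg R x k * sg R x k = 1.
Proof.
rewrite /sg -big_split /=; apply: big1 => i _.
by case: (x i); rewrite ?expr0 ?expr1 ?mulr1 ?mulN1r ?opprK.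
Qed.

Lemma sg_norm (R : realType) n (x : cube n) k : `|sg R x k| = 1.
Proof.
have := sg_sqr R x k; rewrite -expr2 => /eqP; rewrite sqrf_eq1.
by case/orP=> /eqP ->; rewrite ?normrN normr1.
Qed.

Definition sa (R : realType) n (T : {set 'I_n}) (x y : cube n) : R :=
  \sum_(k in T) (y == flip x k)%:R * sg R x k.

Lemma sum_ind (R : realType) n (F : cube n -> R) z :
  \sum_y (y == z)%:R * F y = F z.
Proof.
rewrite (bigD1 z) //= eqxx mul1r big1 ?addr0 // => y /negbTE ->; by rewrite mul0r.
Qed.

Lemma sa_sq (R : realType) n (T : {set 'I_n}) x z :
  \sum_y sa R T x y * sa R T y z = #|T|%:R * (z == x)%:R.
Proof.
under eq_bigr do rewrite /sa big_distrl /=.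
rewrite exchange_big /=.
under eq_bigr => k _ do (under eq_bigr do rewrite -mulrA; rewrite sum_ind big_distrr /=).
set G := fun k l => sg R x k * ((z == flip (flip x k) l)%:R * sg R (flip x k) l).
rewrite -/(\sum_(k in T) \sum_(l in T) G k l).
have -> : \sum_(k in T) \sum_(l in T) G k l =
   \sum_(k in T) G k k + \sum_(k in T) \sum_(l in T) (if l != k then G k l else 0).
  rewrite -big_split /=; apply: eq_bigr => k kT.
  by rewrite (bigD1 k kT) /= big_mkcondr.
have -> : \sum_(k in T) G k k = #|T|%:R * (z == x)%:R.
  rewrite (eq_bigr (fun _ => (z == x)%:R)); first by rewrite sumr_const mulr_natl.
  move=> k _; rewrite /G flipK sg_flip ltnn mul1r mulrCA sg_sqr mulr1 //.
set S := \sum_(k in T) _.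
suff -> : S = 0 by rewrite addr0.
have anti : forall k l, (if l != k then G k l else 0) = - (if k != l then G l k else 0).
  move=> k l; rewrite eq_sym; case: eqP => [_|nkl]; first by rewrite oppr0.
  rewrite /G flipC !sg_flip.
  case: (ltngtP k l) => h.
  - rewrite /=; ring.
  - rewrite /=; ring.
  - by case: nkl; apply: val_inj.
have hS : S = - S.
  rewrite {1}/S exchange_big /= /S -sumrN; apply: eq_bigr => l _.
  rewrite -sumrN; apply: eq_bigr => k _; exact: anti.
have : S *+ 2 == 0 by rewrite mulr2n {1}hS addNr.
by rewrite mulrn_eq0 /= => /eqP.
Qed.

Definition pp (R : realType) n (T : {set 'I_n}) (x : cube n) : R :=
  \prod_(i in T) (-1) ^+ (~~ x i).

Lemma pp_flip (R : realType) n (T : {set 'I_n}) x k :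
  k \in T -> pp R T (flip x k) = - pp R T x.
Proof.
move=> kT; rewrite /pp (bigD1 k kT) [in RHS](bigD1 k kT) /= flipE eqxx negbK.
rewrite -mulNr; congr (_ * _); last first.
  apply: eq_bigr => i /andP [_ /negbTE hik]; by rewrite flipE hik.
by case: (x k); rewrite /= ?expr0 ?expr1 ?opprK.
Qed.

Lemma pp_sqr (R : realType) n (T : {set 'I_n}) x : pp R T x * pp R T x = 1.
Proof.
rewrite /pp -big_split /=; apply: big1 => i _.
by case: (x i); rewrite /= ?expr0 ?expr1 ?mulr1 ?mulN1r ?opprK.
Qed.

Lemma cube_prod (R : realType) n (g : 'I_n -> bool -> R) :
  \sum_(x : cube n) \prod_i g i (x i) = \prod_i (g i true + g i false).
Proof.
transitivity (\prod_i \sum_(b : bool) g i b); last first.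
  by apply: eq_bigr => i _; rewrite big_bool.
by rewrite bigA_distr_bigA.
Qed.

Lemma sum_pp (R : realType) n (T : {set 'I_n}) :
  (0 < #|T|)%N -> \sum_x pp R T x = 0.
Proof.
rewrite card_gt0; case/finset.set0Pn=> i iT.
under eq_bigr do rewrite /pp big_mkcond /=.
rewrite (cube_prod (fun i b => if i \in T then (-1) ^+ (~~ b) else 1 : R)).
rewrite (bigD1 i) //= iT /= expr0 expr1 addrN mul0r //.
Qed.

Lemma bias (R : realType) n (f : cube n -> bool) (c : {set 'I_n} -> R)
  (T : {set 'I_n}) :
  ml_represents c f -> c T != 0 ->
  (forall U : {set 'I_n}, T \subset U -> c U != 0 -> U = T) ->
  \sum_x pp R T x * (f x)%:R != 0.
Proof.
move=> hrep cT hmax.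
under eq_bigr do rewrite -hrep /ml_eval big_distrr /=.
rewrite exchange_big /=.
pose g := fun (U : {set 'I_n}) (i : 'I_n) (b : bool) =>
  ((if i \in T then (-1) ^+ (~~ b) else 1) * (if i \in U then b%:R else 1) : R).
have e1 : forall U x, pp R T x * (c U * \prod_(i in U) (x i)%:R)
                      = c U * \prod_i g U i (x i).
  move=> U x; rewrite mulrCA; congr (_ * _).
  rewrite /pp /g (big_mkcond (fun i => i \in T)) (big_mkcond (fun i => i \in U)) -big_split /=.
  by apply: eq_bigr.
under eq_bigr do (under eq_bigr do rewrite e1; rewrite -big_distrr /= cube_prod).
rewrite (bigD1 T) //= [X in _ + X]big1 ?addr0.
  apply: mulf_neq0 => //; apply/prodf_neq0 => i _.
  rewrite /g; case: (i \in T); rewrite /= ?expr0 ?expr1 ?mulr1 ?mul1r ?mulr0 ?mulN1r.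
    by rewrite ?mulr0n ?mulr1n addr0 oner_eq0.
  by rewrite ?mulr1n -mulr2n pnatr_eq0.
move=> U nUT; case: (boolP (T \subset U)) => hTU.
  have : c U == 0.
    apply/negPn/negP => cU; by case/eqP: nUT; apply: hmax.
  by move/eqP ->; rewrite mul0r.
case/subsetPn: hTU => i iT niU.
rewrite (bigD1 i) //= /g iT (negbTE niU) /= expr0 expr1 !mulr1 addrN mul0r mulr0 //.
Qed.

Lemma sum_indic (R : realType) n (A : {set cube n}) :
  \sum_(x : cube n) ((x \in A)%:R : R) = #|A|%:R.
Proof.
rewrite -sum1_card natr_sum [RHS]big_mkcond /=; apply: eq_bigr => x _.
by case: (x \in A).
Qed.

Lemma big_setH (R : realType) n (T : {set 'I_n}) (f : cube n -> bool) :
  (0 < #|T|)%N -> \sum_x pp R T x * (f x)%:R != 0 ->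
  exists H : {set cube n}, (#|~: H| * 2 < #|{: cube n}|)%N /\
    forall x k, k \in T -> x \in H -> flip x k \in H -> f x != f (flip x k).
Proof.
move=> hT hB.
pose q x : R := pp R T x * (1 - 2 * (f x)%:R).
have q1 : forall x, (q x == 1) || (q x == -1).
  move=> x; rewrite -sqrf_eq1; apply/eqP; rewrite /q exprMn expr2 pp_sqr mul1r.
  by case: (f x); rewrite /= ?mulr1n ?mulr0n; ring.
have hq : \sum_x q x != 0.
  rewrite /q; under eq_bigr do rewrite mulrBr mulr1 mulrCA.
  rewrite sumrB sum_pp // -mulr_sumr sub0r oppr_eq0 mulf_neq0 //.
  by rewrite pnatr_eq0.
pose s : R := if 0 < \sum_x q x then 1 else -1.
exists [set x | q x == s]; split; last first.
  move=> x k kT; rewrite !inE => /eqP hx /eqP hy.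
  have := hy; rewrite -hx /q pp_flip //.
  have pp1 := pp_sqr R T x.
  case: (f x); case: (f (flip x k)) => //= h; exfalso.
  - have : pp R T x = 0 by move: h; rewrite ?mulr1n; lra.
    by move=> h0; move: pp1; rewrite h0 mul0r => /eqP; rewrite eq_sym oner_eq0.
  - have : pp R T x = 0 by move: h; rewrite ?mulr0n; lra.
    by move=> h0; move: pp1; rewrite h0 mul0r => /eqP; rewrite eq_sym oner_eq0.
have hs : 0 < s * \sum_x q x.
  rewrite /s; case: ifP => h; first by rewrite mul1r.
  rewrite mulN1r oppr_gt0 lt_def eq_sym hq /=.
  by rewrite leNgt h.
have e : s * \sum_x q x = #|{: cube n}|%:R - 2 * #|~: [set x | q x == s]|%:R.
  rewrite -sum_indic -sum1_card natr_sum !mulr_sumr -sumrB.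
  apply: eq_bigr => x _; rewrite !inE.
  have s1 : (s == 1) || (s == -1) by rewrite /s; case: ifP; rewrite eqxx ?orbT.
  by case/orP: (q1 x) => /eqP ->; case/orP: s1 => /eqP ->;
    rewrite ?eqxx /= ?mulr1n ?mulr0n; try (rewrite eq_sym -subr_eq0 opprK -mulr2n pnatr_eq0 /=);
    try (rewrite -subr_eq0 opprK -mulr2n pnatr_eq0 /=); ring.
move: hs; rewrite e subr_gt0 -natrM ltr_nat mulnC //.
Qed.

Lemma diag_rank (R : realType) N (Hs : {set 'I_N}) :
  (\rank (diag_mx (\row_i (i \notin Hs)%:R : 'rV[R]_N)) <= #|~: Hs|)%N.
Proof.
set d := \row_i _.
have -> : diag_mx d = \sum_(i | i \notin Hs) delta_mx i i.
  apply/matrixP=> j k; rewrite summxE !mxE.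
  under eq_bigr do rewrite mxE.
  case: (eqVneq j k) => [<-|njk].
  - case: (boolP (j \in Hs)) => h /=.
      rewrite mulr0n big1 // => i hi; case: eqP => [eji|] //=.
      by rewrite -eji h in hi.
    rewrite (bigD1 j) //= eqxx /= big1 ?addr0 // => i /andP [_ nij].
    by rewrite eq_sym (negbTE nij).
  - rewrite mulr0n big1 // => i _; case: eqP => [eji|] //=; case: eqP => //= eki.
    by rewrite eji eki eqxx in njk.
rewrite -sum1_card.
have -> : (\sum_(i in ~: Hs) 1 = \sum_(i | i \notin Hs) 1)%N.
  by apply: eq_bigl => i; rewrite inE.
apply: (big_ind2 (fun (M : 'M[R]_N) k => (\rank M <= k)%N)).
- by rewrite mxrank0.
- move=> M1 k1 M2 k2 h1 h2; apply: leq_trans (mxrank_add _ _) _; exact: leq_add.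
- by move=> i _; rewrite mxrank_delta.
Qed.

Lemma eig_exists (R : realType) N (A : 'M[R]_N) (t : R) (Hs : {set 'I_N}) :
  0 < t -> A *m A = t%:M -> (#|~: Hs| * 2 < N)%N ->
  exists v : 'rV[R]_N, exists e : R,
    [/\ v != 0, e ^+ 2 = t, v *m A = e *: v & forall i, i \notin Hs -> v 0 i = 0].
Proof.
move=> t0 hA hH.
pose d : 'rV[R]_N := \row_i (i \notin Hs)%:R.
pose Dc := diag_mx d.
have hD : (\rank Dc <= #|~: Hs|)%N := diag_rank R Hs.
pose K := kermx Dc.
have hK : (N <= \rank K + #|~: Hs|)%N by rewrite /K mxrank_ker; lia.
pose e0 := Num.sqrt t.
have e0pos : 0 < e0 by rewrite sqrtr_gt0.
have e0sq : e0 ^+ 2 = t by rewrite sqr_sqrtr // ltW.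
pose P := A + e0%:M; pose Q := A - e0%:M.
have hPQ : P *m Q = 0.
  rewrite /P /Q mulmxDl !mulmxBr hA mul_mx_scalar !mul_scalar_mx scale_scalar_mx.
  by rewrite -expr2 e0sq addrA subrK subrr.
have hQP : Q *m P = 0.
  rewrite /P /Q mulmxBl !mulmxDr hA mul_mx_scalar !mul_scalar_mx scale_scalar_mx.
  by rewrite -expr2 e0sq [t%:M + _]addrC subrr.
have hrk : (N <= \rank P + \rank Q)%N.
  have e1 : (2 * e0)^-1 *: (P - Q) = 1%:M.
    rewrite /P /Q opprB addrA addrAC [A + _]addrC addrK -raddfD /= scale_scalar_mx.
    congr (_%:M); rewrite -mulr2n mulr_natl mulVf //.
    by rewrite mulrn_eq0 /= gt_eqF.
  apply: (@leq_trans (\rank (1%:M : 'M[R]_N))); first by rewrite mxrank1.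
  rewrite -e1; apply: leq_trans (mxrank_scale _ _) _.
  by apply: leq_trans (mxrank_add _ _) _; rewrite mxrank_opp.
have key : forall M M' : 'M[R]_N, M *m M' = 0 -> (N <= \rank M * 2)%N ->
    exists v : 'rV[R]_N, [/\ v != 0, v *m M' = 0 & forall i, i \notin Hs -> v 0 i = 0].
  move=> M M' hMM' hM.
  pose cap := (M :&: K)%MS.
  have hc := mxrank_sum_cap M K.
  have hs : (\rank (M + K)%MS <= N)%N by apply: rank_leq_col.
  have : (\rank cap != 0)%N by rewrite /cap; lia.
  rewrite mxrank_eq0 => /eqP cap0.
  have [i hi] : exists i, row i cap != 0.
    case: (pickP (fun i => row i cap != 0)) => [i hi|h]; first by exists i.
    exfalso; apply: cap0; apply/row_matrixP => i; rewrite row0.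
    by move: (h i) => /= /negbFE/eqP.
  exists (row i cap); split => //.
  - have : (row i cap <= M)%MS by apply: submx_trans (row_sub _ _) (capmxSl _ _).
    by case/submxP => D ->; rewrite -mulmxA hMM' mulmx0.
  - move=> j hj.
    have : (row i cap <= K)%MS by apply: submx_trans (row_sub _ _) (capmxSr _ _).
    move/sub_kermxP => /matrixP /(_ 0 j); rewrite mul_mx_diag !mxE hj mulr1 => ->.
    by [].
case: (leqP (\rank Q) (\rank P)) => hPQr.
- have [v [v0 vQ vs]] := key P Q hPQ ltac:(lia).
  exists v, e0; split => //.
  by move: vQ; rewrite /Q mulmxBr mul_mx_scalar => /eqP; rewrite subr_eq0 => /eqP.
- have [v [v0 vP vs]] := key Q P hQP ltac:(lia).
  exists v, (- e0); split => //; first by rewrite sqrrN.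
  move: vP; rewrite /P mulmxDr mul_mx_scalar => /eqP; rewrite addr_eq0 => /eqP ->.
  by rewrite scaleNr.
Qed.

Lemma sum_enumc (R : realType) n (F : cube n -> R) :
  \sum_(i < #|{: cube n}|) F (enum_val i) = \sum_x F x.
Proof.
rewrite [RHS](reindex (fun i : 'I_#|{: cube n}| => enum_val i)) //.
exact: onW_bij (enum_val_bij _).
Qed.

Lemma sqrt_le1 (R : realType) (x : R) : 0 <= x -> Num.sqrt x <= 1 + x.
Proof.
move=> x0; rewrite -(ger0_norm (_ : 0 <= 1 + x)); last by lra.
rewrite -sqrtr_sqr; apply: ler_wsqrtr; nra.
Qed.

Lemma sq_le1 (R : realType) m (v : 'cV[R]_m) i : vnorm v = 1 -> `|v i ord0| <= 1.
Proof.
rewrite /vnorm => h.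
have hs : \sum_(j < m) v j ord0 ^+ 2 = 1.
  by rewrite -(sqr_sqrtr (sumr_ge0 _ (fun j _ => sqr_ge0 (v j ord0)))) h expr1n.
have : v i ord0 ^+ 2 <= 1.
  rewrite -hs (bigD1 i) //= lerDl; apply: sumr_ge0 => j _; exact: sqr_ge0.
rewrite -real_normK ?num_real // -{1}(expr1n _ 2) ler_pXn2r // ?nnegrE //.
Qed.

Lemma spec_ub (R : realType) n (f : cube n -> bool) :
  has_ubound [set r : R | exists v : 'cV[R]_#|{: cube n}|,
                 vnorm v = 1 /\ r = vnorm (sens_adj R f *m v)].
Proof.
set N := #|{: cube n}|.
exists (1 + (N%:R ^+ 2) *+ N) => r [v [hv ->]].
rewrite /vnorm; apply: le_trans (sqrt_le1 (sumr_ge0 _ (fun j _ => sqr_ge0 _))) _.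
rewrite lerD2l.
have -> : (N%:R ^+ 2 : R) *+ N = \sum_(j < N) N%:R ^+ 2.
  by rewrite sumr_const card_ord.
apply: ler_sum => j _.
rewrite -real_normK ?num_real //; apply: lerXn2r; rewrite ?nnegrE //.
rewrite mxE; apply: le_trans (ler_norm_sum _ _ _) _.
have -> : (N%:R : R) = \sum_(k < N) 1 by rewrite sumr_const card_ord.
apply: ler_sum => k _; rewrite normrM mxE.
have h1 : `|(sens_edge f (enum_val j) (enum_val k))%:R : R| <= 1.
  by case: (sens_edge _ _ _); rewrite ?normr1 ?normr0.
apply: le_trans (ler_pM _ _ h1 (sq_le1 k hv)) _ => //; by rewrite mulr1.
Qed.

Lemma spec_lb (R : realType) n (f : cube n -> bool) (t : R) (V : cube n -> R) :
  0 <= t -> (exists x, V x != 0) ->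
  t * \sum_x V x ^+ 2 <= \sum_y (\sum_x (sens_edge f y x)%:R * `|V x|) ^+ 2 ->
  t <= spec_sens R f ^+ 2.
Proof.
move=> t0 [x0 hx0] hineq.
set s := \sum_x V x ^+ 2.
have s0 : 0 < s.
  rewrite /s (bigD1 x0) //=; apply: ltr_wpDr.
    by apply: sumr_ge0 => x _; exact: sqr_ge0.
  by rewrite lt_def sqrf_eq0 hx0 sqr_ge0.
set nv := Num.sqrt s.
have nv0 : 0 < nv by rewrite sqrtr_gt0.
have nv2 : nv ^+ 2 = s by rewrite sqr_sqrtr // ltW.
set N := #|{: cube n}|.
pose w : 'cV[R]_N := \col_j (`|V (enum_val j)| / nv).
have hw : vnorm w = 1.
  rewrite /vnorm; under eq_bigr do rewrite mxE expr_div_n real_normK ?num_real //.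
  rewrite -mulr_suml (sum_enumc (fun x => V x ^+ 2)) -/s nv2 divff ?sqrtr1 //.
  by rewrite gt_eqF.
have le1 : vnorm (sens_adj R f *m w) <= spec_sens R f.
  apply: (ub_le_sup (spec_ub R f)); by exists w.
have G : forall y : cube n, \sum_(k < N) (sens_edge f y (enum_val k))%:R * (`|V (enum_val k)| / nv)
                   = (\sum_x (sens_edge f y x)%:R * `|V x|) / nv.
  move=> y; rewrite mulr_suml -(sum_enumc (fun x => (sens_edge f y x)%:R * `|V x| / nv)).
  by apply: eq_bigr => k _; rewrite mulrA.
have le2 : Num.sqrt t <= vnorm (sens_adj R f *m w).
  rewrite /vnorm; apply: ler_wsqrtr.
  under eq_bigr do rewrite mxE.
  under eq_bigr do (under eq_bigr do rewrite !mxE).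
  under eq_bigr do rewrite G expr_div_n.
  rewrite -mulr_suml
    (sum_enumc (fun y => (\sum_x (sens_edge f y x)%:R * `|V x|) ^+ 2)) nv2.
  by rewrite ler_pdivlMr.
rewrite -(sqr_sqrtr t0); apply: lerXn2r; rewrite ?nnegrE ?sqrtr_ge0 //.
  by apply: le_trans (le_trans le2 le1); rewrite sqrtr_ge0.
exact: le_trans le2 le1.
Qed.

Unset Implicit Arguments.
Set Strict Implicit.
Theorem theorem1p1 (R : realType) (n : nat) (f : cube n -> bool)
    (c : {set 'I_n} -> R) :
  ml_represents c f ->
  forall S : {set 'I_n}, c S != 0 -> (#|S|%:R : R) <= spec_sens R f ^+ 2.
Proof.
move=> hrep S cS.
pose P := fun U : {set 'I_n} => (S \subset U) && (c U != 0).
have PS : P S by rewrite /P subxx cS.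
case: (@arg_maxnP _ S P (fun U : {set 'I_n} => #|U|) PS) => T /andP [hST cT] hmaxT.
have hmax : forall U : {set 'I_n}, T \subset U -> c U != 0 -> U = T.
  move=> U hTU cU; have := hmaxT U; rewrite /P (fintype.subset_trans hST hTU) cU => /(_ isT) hle.
  by apply/eqP; rewrite eq_sym eqEcard hTU; exact: hle.
have hSle : (#|S| <= #|T|)%N := subset_leq_card hST.
case: (posnP #|T|) => hT0.
  have -> : #|S| = 0%N by lia.
  by rewrite sqr_ge0.
apply: le_trans (_ : #|T|%:R <= _); first by rewrite ler_nat.
have [H [hcard hsens]] := @big_setH R n T f hT0 (bias hrep cT hmax).
set N := #|{: cube n}|.
pose A : 'M[R]_N := \matrix_(i, j) sa R T (enum_val i) (enum_val j).
have hA : A *m A = (#|T|%:R : R)%:M.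
  apply/matrixP => i j; rewrite !mxE.
  under eq_bigr do rewrite !mxE.
  rewrite (sum_enumc (fun y => sa R T (enum_val i) y * sa R T y (enum_val j))) sa_sq.
  rewrite (inj_eq enum_val_inj) eq_sym.
  by case: (i == j); rewrite ?mulr1 ?mulr0 ?mulr1n ?mulr0n.
pose Hs := [set i : 'I_N | enum_val i \in H].
have hHs : (#|~: Hs| * 2 < N)%N.
  suff -> : #|~: Hs| = #|~: H| by [].
  rewrite -!sum1_card [in RHS](reindex (fun i : 'I_N => enum_val i)).
    by apply: eq_bigl => i; rewrite !inE.
  exact: onW_bij (enum_val_bij _).
have tpos : (0:R) < #|T|%:R by rewrite ltr0n.
have [v [e [v0 e2 hv vs]]] := eig_exists tpos hA hHs.
pose V x := v 0 (enum_rank x).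
have supp : forall x, x \notin H -> V x = 0.
  by move=> x hx; apply: vs; rewrite !inE enum_rankK.
have eig : forall y, \sum_x V x * sa R T x y = e * V y.
  move=> y; have := congr1 (fun M : 'rV[R]_N => M 0 (enum_rank y)) hv; rewrite /= !mxE => <-.
  rewrite -(sum_enumc (fun x => V x * sa R T x y)); apply: eq_bigr => i _.
  by rewrite /V enum_valK mxE enum_rankK.
apply: (@spec_lb R n f _ V); first by rewrite ler0n.
  have [i hi] : exists i, v 0 i != 0.
    case: (pickP (fun i => v 0 i != 0)) => [i hi|h]; first by exists i.
    case/eqP: v0; apply/rowP => i; rewrite mxE; by move: (h i) => /negbFE/eqP.
  by exists (enum_val i); rewrite /V enum_valK.
rewrite mulr_sumr; apply: ler_sum => y _.
have -> : #|T|%:R * V y ^+ 2 = (e * V y) ^+ 2 by rewrite exprMn e2.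
have sge0 : 0 <= \sum_x (sens_edge f y x)%:R * `|V x|.
  by apply: sumr_ge0 => x _; apply: mulr_ge0.
rewrite -real_normK ?num_real //; apply: lerXn2r; rewrite ?nnegrE //.
case: (boolP (y \in H)) => hy; last by rewrite supp // mulr0 normr0.
rewrite -eig; apply: le_trans (ler_norm_sum _ _ _) _; apply: ler_sum => x _.
rewrite normrM [X in _ <= X]mulrC.
case: (eqVneq (V x) 0) => [->|hVx]; first by rewrite normr0 !mul0r.
have hx : x \in H.
  by apply/negPn/negP => hx; move: hVx; rewrite supp // eqxx.
apply: ler_wpM2l => //.
case: (eqVneq (sa R T x y) 0) => [->|hsa]; first by rewrite normr0 ler0n.
have [k kT hk] : exists2 k, k \in T & y = flip x k.
  case: (pickP (fun k => (k \in T) && (y == flip x k))) => [k /andP [kT /eqP hk]|h].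
    by exists k.
  case/eqP: hsa; rewrite /sa big1 // => k kT.
  by have := h k; rewrite kT /= => ->; rewrite mul0r.
subst y.
have hf := hsens x k kT hx hy.
have [_ e2'] := sens_edge_flip hf.
rewrite e2'.
have -> : sa R T x (flip x k) = sg R x k.
  rewrite /sa (bigD1 k kT) /= eqxx mul1r big1 ?addr0 // => l /andP [_ nlk].
  have -> : (flip x k == flip x l) = false.
    by apply/eqP => /flip_inj hh; rewrite hh eqxx in nlk.
  by rewrite mul0r.
by rewrite sg_norm.
Qed.
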